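(* Let $A$ and $B$ be output types of system $\mathcal F$. Then $A\wedge B$, $A\vee B$ and $LA$ are output types.
   Context: $\lambda$-terms are those of the untyped $\lambda$-calculus; $Fv(t)$ the free variables; normal means without $\beta$-redex. Types of system $\mathcal F$: built from type variables and type constants (atomic, not quantifiable; $O$ is one) with $\rightarrow$, $\forall$; only proper types (in every $\forall XA$, $X$ occurs free in $A$). Typing: (ax) $\Gamma \vdash x_i : A_i$ for $x_i:A_i\in\Gamma$; ($\rightarrow_i$) from $\Gamma, x:B \vdash t : C$ infer $\Gamma \vdash \lambda x t : B \rightarrow C$; ($\rightarrow_e$) from $\Gamma \vdash u : B\rightarrow C$, $\Gamma \vdash v : B$ infer $\Gamma \vdash (u)v : C$; ($\forall_i$) from $\Gamma \vdash t : A$, $X$ not free in $\Gamma$, infer $\Gamma \vdash t : \forall X A$; ($\forall_e$) from $\Gamma \vdash t : \forall X A$ infer $\Gamma \vdash t : A[C/X]$. An output type is a closed type $S$ not containing $O$ such that for every normal $t$ and variable $\alpha$, $\alpha:O\vdash_{\mathcal F}t:S$ implies $\alpha\notin Fv(t)$. With $X$ a type variable not free in $A,B$: $A\wedge B=\forall X\{(A\rightarrow(B\rightarrow X))\rightarrow X\}$, $A\vee B=\forall X\{(A\rightarrow X)\rightarrow((B\rightarrow X)\rightarrow X)\}$, $LA=\forall X\{X\rightarrow[(A\rightarrow(X\rightarrow X))\rightarrow X]\}$. *)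

(* Defs.v *)
From Stdlib Require Import List Arith Bool.
Import ListNotations.

Definition var := nat.

Inductive term : Type :=
| Var : var -> term
| Lam : var -> term -> term
| App : term -> term -> term.

Fixpoint fv (t : term) : list var :=
  match t with
  | Var x => [x]
  | Lam x u => remove Nat.eq_dec x (fv u)
  | App u v => fv u ++ fv v
  end.

Fixpoint normal (t : term) : Prop :=
  match t with
  | Var _ => True
  | Lam _ u => normal u
  | App u v =>
      match u with Lam _ _ => False | _ => normal u end /\ normal v
  end.

(** * Types of system F.
    Type variables are de Bruijn indices ([TVar n]); [All A] binds index 0
    in [A]. Type constants are [TConst k]; the constant O is [TConst 0]. *)
Inductive ty : Type :=
| TVar : nat -> ty
| TConst : nat -> ty
| Arr : ty -> ty -> ty
| All : ty -> ty.

Definition O : ty := TConst 0.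

Fixpoint free_in (n : nat) (A : ty) : bool :=
  match A with
  | TVar m => Nat.eqb m n
  | TConst _ => false
  | Arr A1 A2 => free_in n A1 || free_in n A2
  | All A1 => free_in (S n) A1
  end.

Fixpoint proper (A : ty) : Prop :=
  match A with
  | TVar _ | TConst _ => True
  | Arr A1 A2 => proper A1 /\ proper A2
  | All A1 => free_in 0 A1 = true /\ proper A1
  end.

Fixpoint closed_at (k : nat) (A : ty) : Prop :=
  match A with
  | TVar m => m < k
  | TConst _ => True
  | Arr A1 A2 => closed_at k A1 /\ closed_at k A2
  | All A1 => closed_at (S k) A1
  end.

Definition closed_ty (A : ty) : Prop := closed_at 0 A.

Fixpoint contains_O (A : ty) : bool :=
  match A with
  | TVar _ => false
  | TConst k => Nat.eqb k 0
  | Arr A1 A2 => contains_O A1 || contains_O A2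
  | All A1 => contains_O A1
  end.

Fixpoint tshift (c : nat) (A : ty) : ty :=
  match A with
  | TVar n => if n <? c then TVar n else TVar (S n)
  | TConst k => TConst k
  | Arr A1 A2 => Arr (tshift c A1) (tshift c A2)
  | All A1 => All (tshift (S c) A1)
  end.

(** capture-avoiding substitution of C for variable j (free variables above j
    are shifted down, as the binder of j disappears) *)
Fixpoint tsubst (j : nat) (C : ty) (A : ty) : ty :=
  match A with
  | TVar n => if n =? j then C else if j <? n then TVar (pred n) else TVar n
  | TConst k => TConst k
  | Arr A1 A2 => Arr (tsubst j C A1) (tsubst j C A2)
  | All A1 => All (tsubst (S j) (tshift 0 C) A1)
  end.

(** A[C/X] for [All A] with X = index 0 *)
Definition open_ty (A C : ty) : ty := tsubst 0 C A.

Definition ctx := list (var * ty).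

Fixpoint lookup (G : ctx) (x : var) : option ty :=
  match G with
  | [] => None
  | (y, A) :: G' => if Nat.eqb x y then Some A else lookup G' x
  end.

(** shifting all types of the context: expresses "X not free in Gamma"
    for the freshly bound X in the de Bruijn setting *)
Definition ctx_shift (G : ctx) : ctx := map (fun p => (fst p, tshift 0 (snd p))) G.

Inductive typing : ctx -> term -> ty -> Prop :=
| T_ax : forall G x A, lookup G x = Some A -> typing G (Var x) A
| T_arr_i : forall G x t B C,
    proper B -> typing ((x, B) :: G) t C -> typing G (Lam x t) (Arr B C)
| T_arr_e : forall G u v B C,
    typing G u (Arr B C) -> typing G v B -> typing G (App u v) C
| T_all_i : forall G t A,
    free_in 0 A = true -> typing (ctx_shift G) t A -> typing G t (All A)
| T_all_e : forall G t A C,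
    proper C -> typing G t (All A) -> typing G t (open_ty A C).

Definition output_type (S : ty) : Prop :=
  closed_ty S /\ proper S /\ contains_O S = false /\
  forall (t : term) (alpha : var),
    normal t -> typing [(alpha, O)] t S -> ~ In alpha (fv t).

(** * Connectives. X is the fresh bound variable (index 0); A, B are shifted
    so that X is not free in them. *)
Definition tand (A B : ty) : ty :=
  All (Arr (Arr (tshift 0 A) (Arr (tshift 0 B) (TVar 0))) (TVar 0)).

Definition tor (A B : ty) : ty :=
  All (Arr (Arr (tshift 0 A) (TVar 0))
           (Arr (Arr (tshift 0 B) (TVar 0)) (TVar 0))).

Definition tlist (A : ty) : ty :=
  All (Arr (TVar 0) (Arr (Arr (tshift 0 A) (Arr (TVar 0) (TVar 0))) (TVar 0))).

(* Main.v *)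
Require Import Defs.
From Stdlib Require Import List Lia Arith Bool.
Import ListNotations.

Ltac vcase := repeat (cbn -[Nat.eqb Nat.ltb] in *; match goal with
  | |- context [?a <? ?b] => destruct (Nat.ltb_spec a b)
  | |- context [?a =? ?b] => destruct (Nat.eqb_spec a b) end);
  try (exfalso; lia); try reflexivity; try (f_equal; lia).

Lemma shift_shift : forall A c d, d <= c ->
  tshift (S c) (tshift d A) = tshift d (tshift c A).
Proof.
  induction A; intros c d H; cbn -[Nat.eqb Nat.ltb].
  - vcase.
  - reflexivity.
  - rewrite IHA1, IHA2 by lia; reflexivity.
  - rewrite IHA by lia; reflexivity.
Qed.

Lemma tsubst_shift : forall D j C, tsubst j C (tshift j D) = D.
Proof.
  induction D; intros j C; cbn -[Nat.eqb Nat.ltb].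
  - vcase.
  - reflexivity.
  - rewrite IHD1, IHD2; reflexivity.
  - rewrite IHD; reflexivity.
Qed.

Lemma shift_subst : forall D c j C, c <= j ->
  tshift c (tsubst j C D) = tsubst (S j) (tshift c C) (tshift c D).
Proof.
  induction D; intros c j C H; cbn -[Nat.eqb Nat.ltb].
  - vcase.
  - reflexivity.
  - rewrite IHD1, IHD2 by lia; reflexivity.
  - rewrite IHD by lia. rewrite shift_shift by lia. reflexivity.
Qed.

Lemma subst_subst : forall A i j C C0, i <= j ->
  tsubst j C (tsubst i C0 A) =
  tsubst i (tsubst j C C0) (tsubst (S j) (tshift i C) A).
Proof.
  induction A; intros i j C C0 H; cbn -[Nat.eqb Nat.ltb].
  - vcase; try (rewrite tsubst_shift; reflexivity).
  - reflexivity.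
  - rewrite IHA1, IHA2 by lia; reflexivity.
  - rewrite IHA by lia. f_equal. f_equal.
    + rewrite shift_subst by lia. reflexivity.
    + rewrite shift_shift by lia. reflexivity.
Qed.

Lemma free_subst : forall A k j C, k < j -> free_in k A = true ->
  free_in k (tsubst j C A) = true.
Proof.
  induction A; intros k j C H F; simpl in *.
  - apply Nat.eqb_eq in F; subst. vcase; apply Nat.eqb_refl.
  - discriminate.
  - apply orb_true_iff in F as [F|F]; apply orb_true_iff; [left|right]; auto.
  - apply IHA; auto; lia.
Qed.

Lemma free_shift : forall A k c, k < c -> free_in k A = true ->
  free_in k (tshift c A) = true.
Proof.
  induction A; intros k c H F; simpl in *.
  - apply Nat.eqb_eq in F; subst. vcase; apply Nat.eqb_refl.
  - discriminate.
  - apply orb_true_iff in F as [F|F]; apply orb_true_iff; [left|right]; auto.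
  - apply IHA; auto; lia.
Qed.

Lemma free_shift_false : forall A c, free_in c (tshift c A) = false.
Proof.
  induction A; intros c; cbn -[Nat.eqb Nat.ltb].
  - vcase; apply Nat.eqb_neq; lia.
  - reflexivity.
  - rewrite IHA1, IHA2; reflexivity.
  - apply IHA.
Qed.

Lemma proper_shift : forall A c, proper A -> proper (tshift c A).
Proof.
  induction A; intros c P; simpl in *; auto.
  - destruct (n <? c); exact I.
  - destruct P; split; auto.
  - destruct P; split; auto. apply free_shift; auto; lia.
Qed.

Lemma proper_subst : forall A j C, proper C -> proper A -> proper (tsubst j C A).
Proof.
  induction A; intros j C PC P; simpl in *; auto.
  - destruct (n =? j); auto. destruct (j <? n); exact I.
  - destruct P; split; auto.
  - destruct P; split.
    + apply free_subst; auto; lia.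
    + apply IHA; auto. apply proper_shift; auto.
Qed.

Lemma closed_mono : forall A k k', closed_at k A -> k <= k' -> closed_at k' A.
Proof.
  induction A; intros k k' H L; simpl in *; try tauto; try lia.
  - destruct H; split; eauto.
  - eapply IHA; eauto; lia.
Qed.

Lemma closed_shift_id : forall A k c, closed_at k A -> k <= c -> tshift c A = A.
Proof.
  induction A; intros k c H L; simpl in *.
  - vcase.
  - reflexivity.
  - destruct H; erewrite IHA1, IHA2; eauto.
  - erewrite IHA; eauto; lia.
Qed.

Lemma closed_subst_id : forall A k j C, closed_at k A -> k <= j -> tsubst j C A = A.
Proof.
  induction A; intros k j C H L; simpl in *.
  - vcase.
  - reflexivity.
  - destruct H; erewrite IHA1, IHA2; eauto.
  - erewrite IHA; eauto; lia.
Qed.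

Definition ctx_subst (j : nat) (C : ty) (G : ctx) : ctx :=
  map (fun p => (fst p, tsubst j C (snd p))) G.

Lemma lookup_shift : forall G x,
  lookup (ctx_shift G) x = option_map (tshift 0) (lookup G x).
Proof.
  induction G as [|[y A] G IH]; intros x; simpl; auto.
  destruct (x =? y); simpl; auto.
Qed.

Lemma lookup_subst : forall G j C x,
  lookup (ctx_subst j C G) x = option_map (tsubst j C) (lookup G x).
Proof.
  induction G as [|[y A] G IH]; intros j C x; simpl; auto.
  destruct (x =? y); simpl; auto.
Qed.

Lemma ctx_subst_shift : forall G C, ctx_subst 0 C (ctx_shift G) = G.
Proof.
  induction G as [|[y A] G IH]; intros C; simpl; auto.
  rewrite tsubst_shift, IH; reflexivity.
Qed.

Lemma ctx_shift_subst : forall G j C,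
  ctx_shift (ctx_subst j C G) = ctx_subst (S j) (tshift 0 C) (ctx_shift G).
Proof.
  induction G as [|[y A] G IH]; intros j C; simpl; auto.
  rewrite IH, shift_subst by lia; reflexivity.
Qed.

Lemma typing_subst : forall G t T, typing G t T ->
  forall j C, proper C -> typing (ctx_subst j C G) t (tsubst j C T).
Proof.
  induction 1; intros j C0 PC.
  - apply T_ax. rewrite lookup_subst, H; reflexivity.
  - apply T_arr_i; [apply proper_subst; auto | apply (IHtyping j C0 PC)].
  - eapply T_arr_e; [apply (IHtyping1 j C0 PC) | apply (IHtyping2 j C0 PC)].
  - simpl. apply T_all_i; [apply free_subst; auto; lia|].
    rewrite ctx_shift_subst. apply IHtyping. apply proper_shift; auto.
  - unfold open_ty. rewrite subst_subst by lia.
    apply T_all_e; [apply proper_subst; auto|].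
    apply (IHtyping j C0 PC).
Qed.

Fixpoint LamTy (G : ctx) (x : var) (u : term) (T : ty) : Prop :=
  match T with
  | Arr B C => proper B /\ typing ((x, B) :: G) u C
  | All T' => free_in 0 T' = true /\ LamTy (ctx_shift G) x u T'
  | _ => False
  end.

Lemma LamTy_subst : forall T G x u j C, proper C -> LamTy G x u T ->
  LamTy (ctx_subst j C G) x u (tsubst j C T).
Proof.
  induction T; intros G x u j C PC H; simpl in *; try tauto.
  - destruct H as [P Ty]; split. apply proper_subst; auto.
    apply (typing_subst _ _ _ Ty j C PC).
  - destruct H as [F L]; split. apply free_subst; auto; lia.
    rewrite ctx_shift_subst. apply IHT; auto. apply proper_shift; auto.
Qed.

Lemma lam_inv : forall G t T, typing G t T ->
  forall x u, t = Lam x u -> LamTy G x u T.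
Proof.
  induction 1; intros y w E; try discriminate.
  - inversion E; subst; simpl; auto.
  - simpl; split; auto.
  - specialize (IHtyping y w E). simpl in IHtyping. destruct IHtyping as [F L].
    rewrite <- (ctx_subst_shift G C). apply LamTy_subst; auto.
Qed.

Fixpoint headvar (t : term) : option var :=
  match t with Var x => Some x | App u _ => headvar u | Lam _ _ => None end.
Fixpoint nargs (t : term) : nat :=
  match t with App u _ => S (nargs u) | _ => 0 end.
Fixpoint sfree (D : ty) : Prop :=
  match D with Arr _ D2 => sfree D2 | All _ => False | _ => True end.
Fixpoint arity (D : ty) : nat :=
  match D with Arr _ D2 => S (arity D2) | _ => 0 end.
Fixpoint tl (n : nat) (D : ty) : ty :=
  match n, D with
  | 0, _ => D
  | S n', Arr _ D2 => tl n' D2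
  | S _, _ => D
  end.

Lemma tl_S : forall n D B C, tl n D = Arr B C -> tl (S n) D = C /\ S n <= arity D.
Proof.
  induction n; intros D B C H; simpl in *.
  - subst; simpl; split; auto; lia.
  - destruct D; try discriminate. apply IHn in H. simpl. destruct H; split; auto; lia.
Qed.

Lemma tl_shift : forall n D c, tl n (tshift c D) = tshift c (tl n D).
Proof.
  induction n; intros D c; simpl; auto.
  destruct D; simpl; auto. destruct (n0 <? c); auto.
Qed.

Lemma sfree_shift : forall D c, sfree D -> sfree (tshift c D).
Proof. induction D; intros c H; simpl in *; auto. destruct (n <? c); exact I. Qed.

Lemma arity_shift : forall D c, arity (tshift c D) = arity D.
Proof. induction D; intros c; simpl; auto. destruct (n <? c); auto. Qed.

Lemma sfree_tl : forall n D, sfree D -> sfree (tl n D).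
Proof. induction n; intros D H; simpl; auto. destruct D; simpl in *; auto. Qed.

Lemma spine : forall G t T, typing G t T ->
  forall h D, headvar t = Some h -> lookup G h = Some D -> sfree D ->
  T = tl (nargs t) D /\ nargs t <= arity D.
Proof.
  induction 1; intros h D Hh HL SF; simpl in *.
  - inversion Hh; subst. rewrite HL in H; inversion H; subst. split; auto; lia.
  - discriminate.
  - destruct (IHtyping1 h D Hh HL SF) as [E L].
    symmetry in E. apply tl_S in E. destruct E; split; auto.
  - exfalso. assert (HL' : lookup (ctx_shift G) h = Some (tshift 0 D))
      by (rewrite lookup_shift, HL; reflexivity).
    destruct (IHtyping h (tshift 0 D) Hh HL' (sfree_shift _ _ SF)) as [E _].
    rewrite tl_shift in E. subst. rewrite free_shift_false in H. discriminate.
  - exfalso. destruct (IHtyping h D Hh HL SF) as [E _].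
    pose proof (sfree_tl (nargs t) D SF). rewrite <- E in H1. simpl in H1. auto.
Qed.

Lemma app_inv : forall G u v T, typing G (App u v) T ->
  forall h D, headvar u = Some h -> lookup G h = Some D -> sfree D ->
  exists B, typing G u (Arr B T) /\ typing G v B.
Proof.
  intros G u v T Ty h D Hh HL SF.
  assert (NA : forall A', T = All A' -> False).
  { intros A' E; subst. destruct (spine _ _ _ Ty h D Hh HL SF) as [E _].
    pose proof (sfree_tl (nargs (App u v)) D SF) as S'. rewrite <- E in S'. exact S'. }
  inversion Ty; subst.
  - eauto.
  - exfalso; eauto.
  - exfalso. destruct (spine _ _ _ H0 h D Hh HL SF) as [E _].
    pose proof (sfree_tl (nargs (App u v)) D SF) as S'. rewrite <- E in S'. exact S'.
Qed.

Lemma fv_lookup : forall G t T, typing G t T ->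
  forall y, In y (fv t) -> exists D, lookup G y = Some D.
Proof.
  induction 1; intros y Hy; simpl in *.
  - destruct Hy as [E|[]]; subst; eauto.
  - apply in_remove in Hy as [Hy N]. destruct (IHtyping y Hy) as [D HD].
    simpl in HD. apply Nat.eqb_neq in N. rewrite N in HD. eauto.
  - apply in_app_or in Hy as [Hy|Hy]; eauto.
  - destruct (IHtyping y Hy) as [D HD]. rewrite lookup_shift in HD.
    destruct (lookup G y); simpl in HD; try discriminate; eauto.
  - eauto.
Qed.

Lemma headvar_fv : forall t h, headvar t = Some h -> In h (fv t).
Proof.
  induction t; intros h H; simpl in *; try discriminate.
  - inversion H; auto.
  - apply in_or_app; left; auto.
Qed.

Lemma normal_head : forall t, normal t -> (forall x u, t <> Lam x u) ->
  exists h, headvar t = Some h.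
Proof.
  induction t; intros N NL; simpl in *.
  - eauto.
  - exfalso; eapply NL; eauto.
  - destruct N as [N1 _]. destruct t1; try contradiction.
    + simpl; eauto.
    + apply IHt1; auto. intros x u E; discriminate.
Qed.

Inductive rig : ty -> nat -> Prop :=
| rig0 : rig O 0
| rigS : forall D1 D2 k, proper D1 -> rig D2 k -> rig (Arr D1 D2) (S k).

Lemma rig_arity : forall D k, rig D k -> arity D = k.
Proof. induction 1; simpl; auto. Qed.

Lemma rig_sfree : forall D k, rig D k -> sfree D.
Proof. induction 1; simpl; auto. Qed.

Lemma rig_tl : forall D k, rig D k -> forall n, n <= k -> rig (tl n D) (k - n).
Proof.
  induction 1; intros n L.
  - assert (n = 0) by lia; subst; simpl; constructor.
  - destruct n; simpl. constructor; auto. apply IHrig; lia.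
Qed.

Lemma rig_shift : forall D k, rig D k -> forall c, rig (tshift c D) k.
Proof.
  induction 1; intros c; simpl. constructor.
  constructor; auto. apply proper_shift; auto.
Qed.

Fixpoint stub (b : var) (k : nat) : term :=
  match k with 0 => Var b | S k' => Lam (S b) (stub b k') end.

Lemma stub_typing : forall D k, rig D k -> forall G b,
  lookup G b = Some O -> typing G (stub b k) D.
Proof.
  induction 1; intros G b HL; simpl.
  - constructor; auto.
  - constructor; auto. apply IHrig. simpl.
    assert (b =? S b = false) by (apply Nat.eqb_neq; lia). rewrite H1; auto.
Qed.

Lemma stub_fv : forall k b, In b (fv (stub b k)).
Proof.
  induction k; intros b; simpl; auto.
  apply in_in_remove; [lia | auto].
Qed.

Lemma stub_normal : forall k b, normal (stub b k).
Proof. induction k; simpl; auto. Qed.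

Definition upd (m : var -> option nat) (y : var) : var -> option nat :=
  fun z => if z =? y then None else m z.

Fixpoint phi (b : var) (m : var -> option nat) (t : term) : term :=
  match t with
  | Var y => match m y with Some k => stub b k | None => Var y end
  | Lam y u => Lam y (phi b (upd m y) u)
  | App u v =>
      match headvar u with
      | Some h => match m h with
                  | Some k => stub b (k - S (nargs u))
                  | None => App (phi b m u) (phi b m v)
                  end
      | None => App (phi b m u) (phi b m v)
      end
  end.

Fixpoint allvars (t : term) : list var :=
  match t with
  | Var x => [x]
  | Lam x u => x :: allvars u
  | App u v => allvars u ++ allvars v
  end.

Lemma phi_notlam : forall t b m h, headvar t = Some h -> m h = None ->
  match phi b m t with Lam _ _ => False | _ => True end.
Proof.
  destruct t; intros b m h Hh Hm; simpl in *; try discriminate.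
  - inversion Hh; subst. rewrite Hm; auto.
  - rewrite Hh, Hm; auto.
Qed.

Lemma phi_normal : forall t b m, normal t -> normal (phi b m t).
Proof.
  induction t; intros b m N; simpl in *.
  - destruct (m v); auto. apply stub_normal.
  - auto.
  - destruct N as [N1 N2].
    assert (Nu : normal t1) by (destruct t1; auto; contradiction).
    destruct (headvar t1) eqn:Hh.
    + destruct (m v) eqn:Hm.
      * apply stub_normal.
      * simpl. split; auto. pose proof (phi_notlam t1 b m v Hh Hm).
        pose proof (IHt1 b m Nu) as IH1; destruct (phi b m t1); auto; contradiction.
    + exfalso. destruct (normal_head t1 Nu) as [h' Hh'].
      { intros x u E; subst; simpl in N1; contradiction. }
      congruence.
Qed.

Lemma phi_typing : forall G t T, typing G t T ->
  forall b m G',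
  (forall y k, m y = Some k -> exists D, lookup G y = Some D /\ rig D k) ->
  (forall y, m y = None -> In y (fv t) -> lookup G' y = lookup G y) ->
  lookup G' b = Some O -> ~ In b (allvars t) ->
  typing G' (phi b m t) T.
Proof.
  induction 1; intros b m G' HR HA HB NB; simpl.
  - destruct (m x) eqn:Hm.
    + destruct (HR x n Hm) as [D [HD RD]]. rewrite H in HD; inversion HD; subst.
      apply stub_typing; auto.
    + constructor. rewrite HA; simpl; auto.
  - constructor; auto. apply IHtyping.
    + intros y k Hy. unfold upd in Hy. simpl.
      destruct (y =? x); [discriminate|]. auto.
    + intros y Hy Iy. simpl. unfold upd in Hy.
      destruct (y =? x) eqn:E; auto.
      apply HA; auto. apply in_in_remove; auto. apply Nat.eqb_neq; auto.
    + simpl. simpl in NB. assert (b =? x = false) by (apply Nat.eqb_neq; intuition).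
      rewrite H1; auto.
    + simpl in NB; intuition.
  - destruct (headvar u) eqn:Hh.
    + destruct (m v0) eqn:Hm.
      * destruct (HR v0 n Hm) as [D [HD RD]].
        assert (Ty : typing G (App u v) C) by (econstructor; eauto).
        destruct (spine _ _ _ Ty v0 D Hh HD (rig_sfree _ _ RD)) as [E L].
        change (nargs (App u v)) with (S (nargs u)) in E, L. rewrite (rig_arity _ _ RD) in L. subst C.
        apply stub_typing; auto. apply rig_tl; auto.
      * eapply T_arr_e.
        -- apply IHtyping1; auto. intros y Hy Iy; apply HA; simpl; auto using in_or_app.
           simpl in NB; intro; apply NB; apply in_or_app; auto.
        -- apply IHtyping2; auto. intros y Hy Iy; apply HA; simpl; auto using in_or_app.
           simpl in NB; intro; apply NB; apply in_or_app; auto.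
    + eapply T_arr_e.
      -- apply IHtyping1; auto. intros y Hy Iy; apply HA; simpl; auto using in_or_app.
         simpl in NB; intro; apply NB; apply in_or_app; auto.
      -- apply IHtyping2; auto. intros y Hy Iy; apply HA; simpl; auto using in_or_app.
         simpl in NB; intro; apply NB; apply in_or_app; auto.
  - fold (phi b m t). constructor; auto. apply IHtyping; auto.
    + intros y k Hy. destruct (HR y k Hy) as [D [HD RD]].
      exists (tshift 0 D). rewrite lookup_shift, HD; split; auto. apply rig_shift; auto.
    + intros y Hy Iy. rewrite !lookup_shift, HA; auto.
    + rewrite lookup_shift, HB; reflexivity.
  - fold (phi b m t). constructor; auto.
Qed.

Lemma phi_fv : forall t b m y k, m y = Some k -> In y (fv t) ->
  ~ In b (allvars t) -> In b (fv (phi b m t)).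
Proof.
  induction t; intros b m y k Hm Iy NB; simpl in *.
  - destruct Iy as [E|[]]; subst. rewrite Hm. apply stub_fv.
  - apply in_remove in Iy as [Iy N].
    apply in_in_remove; [intro; apply NB; auto|].
    eapply (IHt b (upd m v) y k); auto.
    unfold upd. apply Nat.eqb_neq in N. rewrite N; auto.
  - destruct (headvar t1) eqn:Hh; [destruct (m v) eqn:Hm'|].
    + apply stub_fv.
    + simpl. apply in_or_app. apply in_app_or in Iy as [Iy|Iy]; [left|right];
        eapply IHt1 || eapply IHt2; eauto; intro; apply NB; apply in_or_app; auto.
    + simpl. apply in_or_app. apply in_app_or in Iy as [Iy|Iy]; [left|right];
        eapply IHt1 || eapply IHt2; eauto; intro; apply NB; apply in_or_app; auto.
Qed.

Lemma fresh_var : forall l : list var, ~ In (S (list_max l)) l.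
Proof.
  intros l I. assert (H : list_max l <= list_max l) by lia.
  apply list_max_le in H. rewrite Forall_forall in H. apply H in I. lia.
Qed.

Lemma strengthen : forall G a A, output_type A ->
  (forall y D, lookup G y = Some D -> rig D (arity D)) ->
  normal a -> typing G a A -> forall y, ~ In y (fv a).
Proof.
  intros G a A OA HG N Ty y Iy.
  set (b := S (list_max (allvars a))).
  assert (NB : ~ In b (allvars a)) by apply fresh_var.
  set (m := fun z => option_map arity (lookup G z)).
  assert (T2 : typing [(b, O)] (phi b m a) A).
  { apply (phi_typing _ _ _ Ty).
    - intros z k Hz. unfold m in Hz. destruct (lookup G z) eqn:E; simpl in Hz; try discriminate.
      inversion Hz; subst. eauto.
    - intros z Hz Iz. exfalso. destruct (fv_lookup _ _ _ Ty z Iz) as [D HD].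
      unfold m in Hz. rewrite HD in Hz. discriminate.
    - simpl. rewrite Nat.eqb_refl; auto.
    - auto. }
  destruct OA as [_ [_ [_ OA]]].
  apply (OA (phi b m a) b (phi_normal _ _ _ N) T2).
  destruct (fv_lookup _ _ _ Ty y Iy) as [D HD].
  apply (phi_fv a b m y (arity D)); auto. unfold m; rewrite HD; reflexivity.
Qed.

Lemma neutral : forall G t T, normal t -> typing G t T ->
  (forall x u, t <> Lam x u) -> exists h D, headvar t = Some h /\ lookup G h = Some D.
Proof.
  intros G t T N Ty NL. destruct (normal_head t N NL) as [h Hh].
  destruct (fv_lookup _ _ _ Ty h (headvar_fv _ _ Hh)) as [D HD]. eauto.
Qed.

Lemma decomp0 : forall t h, headvar t = Some h -> nargs t = 0 -> t = Var h.
Proof. destruct t; simpl; intros; congruence. Qed.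

Lemma decomp1 : forall t h, headvar t = Some h -> nargs t = 1 ->
  exists a, t = App (Var h) a.
Proof.
  destruct t; simpl; intros; try congruence.
  inversion H0. rewrite (decomp0 _ _ H H2). eauto.
Qed.

Lemma decomp2 : forall t h, headvar t = Some h -> nargs t = 2 ->
  exists a c, t = App (App (Var h) a) c.
Proof.
  destruct t; simpl; intros; try congruence.
  inversion H0. destruct (decomp1 _ _ H H2) as [a E]. subst. eauto.
Qed.

Lemma tl_const : forall n k, tl n (TConst k) = TConst k.
Proof. destruct n; reflexivity. Qed.

Lemma strengthen_X : forall G a C, output_type C -> typing G a C -> normal a ->
  (forall y D, lookup G y = Some D -> rig (tsubst 0 O D) (arity (tsubst 0 O D))) ->
  forall y, ~ In y (fv a).
Proof.
  intros G a C OC Ty N HG.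
  assert (Ty' := typing_subst _ _ _ Ty 0 O I).
  assert (CC : closed_ty C) by apply OC.
  rewrite (closed_subst_id C 0 0 O CC (le_n 0)) in Ty'.
  apply (strengthen (ctx_subst 0 O G) a C OC); auto.
  intros y D HD. rewrite lookup_subst in HD.
  destruct (lookup G y) eqn:E; simpl in HD; inversion HD; subst. eauto.
Qed.

Lemma app2_inv : forall G h a c T D1 D2, typing G (App (App (Var h) a) c) T ->
  lookup G h = Some (Arr D1 (Arr D2 T)) -> sfree T ->
  typing G a D1 /\ typing G c D2.
Proof.
  intros G h a c T D1 D2 Ty HL SF.
  destruct (app_inv _ _ _ _ Ty h _ eq_refl HL SF) as [B1 [T1 T2]].
  destruct (app_inv _ _ _ _ T1 h _ eq_refl HL SF) as [B2 [T3 T4]].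
  destruct (spine _ _ _ T3 h _ eq_refl HL SF) as [E _]. simpl in E.
  inversion E; subst. auto.
Qed.

Lemma app1_inv : forall G h a T D1, typing G (App (Var h) a) T ->
  lookup G h = Some (Arr D1 T) -> sfree T -> typing G a D1.
Proof.
  intros G h a T D1 Ty HL SF.
  destruct (app_inv _ _ _ _ Ty h _ eq_refl HL SF) as [B1 [T1 T2]].
  destruct (spine _ _ _ T1 h _ eq_refl HL SF) as [E _]. simpl in E.
  inversion E; subst. auto.
Qed.

Lemma notlam_app : forall u v x w, App u v <> Lam x w.
Proof. discriminate. Qed.
Lemma notlam_var : forall y x w, Var y <> Lam x w.
Proof. discriminate. Qed.

Lemma neutral_alpha : forall t al T, normal t -> typing [(al, O)] t T ->
  (forall x u, t <> Lam x u) -> T = O.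
Proof.
  intros t al T N Ty NL. destruct (neutral _ _ _ N Ty NL) as [h [D [Hh HD]]].
  assert (D = O) by (simpl in HD; destruct (h =? al); congruence). subst.
  destruct (spine _ _ _ Ty h O Hh HD I) as [E _]. rewrite E. apply tl_const.
Qed.

Lemma lam_or_not : forall t, (exists x u, t = Lam x u) \/ (forall x u, t <> Lam x u).
Proof. destruct t; [right; discriminate | left; eauto | right; discriminate]. Qed.

Lemma shift_closed : forall A, output_type A -> tshift 0 A = A.
Proof. intros A OA. apply (closed_shift_id A 0 0); [apply OA | lia]. Qed.

Lemma notin_remove : forall al f l, (al = f \/ ~ In al l) -> ~ In al (remove Nat.eq_dec f l).
Proof.
  intros al f l H I. apply in_remove in I as [I N]. destruct H; auto.
Qed.

Lemma out_and : forall A B, output_type A -> output_type B -> output_type (tand A B).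
Proof.
  intros A B OA OB. unfold tand. rewrite (shift_closed A OA), (shift_closed B OB).
  pose proof OA as [CA [PA [OA0 _]]]. pose proof OB as [CB [PB [OB0 _]]].
  split; [|split; [|split]].
  - unfold closed_ty; simpl. repeat split; try lia; eapply closed_mono; eauto.
  - simpl. rewrite !orb_true_r. repeat split; auto.
  - simpl. rewrite OA0, OB0. reflexivity.
  - intros t al N Ty. destruct (lam_or_not t) as [[f [u E]]|NL].
    2:{ exfalso. pose proof (neutral_alpha _ _ _ N Ty NL). discriminate. }
    subst t. simpl. apply notin_remove.
    destruct (Nat.eq_dec al f) as [E|NE]; [left; auto| right].
    pose proof (lam_inv _ _ _ Ty f u eq_refl) as L. simpl in L.
    destruct L as [_ [PP Tu]]. change (tshift 0 O) with O in Tu.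
    simpl in N.
    destruct (lam_or_not u) as [[g [w E]]|NLu].
    { subst u. pose proof (lam_inv _ _ _ Tu g w eq_refl). simpl in H. contradiction. }
    destruct (neutral _ _ _ N Tu NLu) as [h [D [Hh HD]]].
    assert (HD' : D = Arr A (Arr B (TVar 0)) \/ D = O).
    { simpl in HD. destruct (h =? f); [left; congruence|].
      destruct (h =? al); [right; inversion HD; reflexivity | discriminate]. }
    assert (SF : sfree D) by (destruct HD'; subst; simpl; auto).
    destruct (spine _ _ _ Tu h D Hh HD SF) as [E L].
    destruct HD' as [HD'|HD']; subst D.
    2:{ unfold O in E; rewrite tl_const in E. discriminate. }
    simpl in L. destruct (nargs u) as [|[|[|n]]] eqn:En; simpl in E; try discriminate; try lia.
    destruct (decomp2 u h Hh En) as [a [c Eu]]. subst u.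
    destruct (app2_inv _ _ _ _ _ _ _ Tu HD I) as [Ta Tc].
    simpl in N. destruct N as [[_ Na] Nc].
    assert (RG : forall y D, lookup ((f, Arr A (Arr B (TVar 0))) :: [(al, O)]) y = Some D ->
              rig (tsubst 0 O D) (arity (tsubst 0 O D))).
    { intros y D HyD. simpl in HyD. destruct (y =? f); [inversion HyD; subst|].
      - simpl. rewrite (closed_subst_id A 0 0 O CA), (closed_subst_id B 0 0 O CB) by lia.
        simpl. repeat constructor; auto.
      - destruct (y =? al); inversion HyD; subst. simpl. constructor. }
    pose proof (strengthen_X _ _ _ OA Ta Na RG al).
    pose proof (strengthen_X _ _ _ OB Tc Nc RG al).
    simpl. intros [I|I].
    + subst h. simpl in HD. apply Nat.eqb_neq in NE. rewrite NE, Nat.eqb_refl in HD. discriminate.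
    + apply in_app_or in I as [I|I]; contradiction.
Qed.

Lemma head_O : forall G u T h, typing G u T -> headvar u = Some h ->
  lookup G h = Some O -> T = O.
Proof.
  intros G u T h Ty Hh HL. destruct (spine _ _ _ Ty h O Hh HL I) as [E _].
  rewrite E. apply tl_const.
Qed.

Lemma head_arrX : forall G u h C, typing G u (TVar 0) -> headvar u = Some h ->
  lookup G h = Some (Arr C (TVar 0)) -> exists c, u = App (Var h) c /\ typing G c C.
Proof.
  intros G u h C Ty Hh HL. destruct (spine _ _ _ Ty h _ Hh HL I) as [E L].
  simpl in L. destruct (nargs u) as [|[|n]] eqn:En; simpl in E; try discriminate; try lia.
  destruct (decomp1 u h Hh En) as [c Eu]. subst u.
  exists c; split; auto. eapply app1_inv; eauto. exact I.
Qed.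

Lemma head_X : forall G u h, typing G u (TVar 0) -> headvar u = Some h ->
  lookup G h = Some (TVar 0) -> u = Var h.
Proof.
  intros G u h Ty Hh HL. destruct (spine _ _ _ Ty h _ Hh HL I) as [E L].
  simpl in L. assert (nargs u = 0) by lia. apply decomp0; auto.
Qed.

Lemma head_arr2X : forall G u h C, typing G u (TVar 0) -> headvar u = Some h ->
  lookup G h = Some (Arr C (Arr (TVar 0) (TVar 0))) ->
  exists a c, u = App (App (Var h) a) c /\ typing G a C /\ typing G c (TVar 0).
Proof.
  intros G u h C Ty Hh HL. destruct (spine _ _ _ Ty h _ Hh HL I) as [E L].
  simpl in L. destruct (nargs u) as [|[|[|n]]] eqn:En; simpl in E; try discriminate; try lia.
  destruct (decomp2 u h Hh En) as [a [c Eu]]. subst u.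
  destruct (app2_inv _ _ _ _ _ _ _ Ty HL I). eauto.
Qed.

Lemma lookup3 : forall y a b c A B C D,
  lookup [(a, A); (b, B); (c, C)] y = Some D -> D = A \/ D = B \/ D = C.
Proof.
  intros. simpl in H. destruct (y =? a); [inversion H; auto|].
  destruct (y =? b); [inversion H; auto|]. destruct (y =? c); inversion H; auto.
Qed.

Lemma lookup2 : forall y a b A B D,
  lookup [(a, A); (b, B)] y = Some D -> D = A \/ D = B.
Proof.
  intros. simpl in H. destruct (y =? a); [inversion H; auto|].
  destruct (y =? b); inversion H; auto.
Qed.

Lemma rigA : forall A, output_type A -> rig (tsubst 0 O (Arr A (TVar 0))) (arity (tsubst 0 O (Arr A (TVar 0)))).
Proof.
  intros A OA. simpl. rewrite (closed_subst_id A 0 0 O) by (apply OA || lia).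
  repeat constructor. apply OA.
Qed.

Lemma rigO : rig (tsubst 0 O O) (arity (tsubst 0 O O)).
Proof. constructor. Qed.

Lemma out_or : forall A B, output_type A -> output_type B -> output_type (tor A B).
Proof.
  intros A B OA OB. unfold tor. rewrite (shift_closed A OA), (shift_closed B OB).
  pose proof OA as [CA [PA [OA0 _]]]. pose proof OB as [CB [PB [OB0 _]]].
  split; [|split; [|split]].
  - unfold closed_ty; simpl. repeat split; try lia; eapply closed_mono; eauto.
  - simpl. rewrite !orb_true_r. repeat split; auto.
  - simpl. rewrite OA0, OB0. reflexivity.
  - intros t al N Ty. destruct (lam_or_not t) as [[f [w E]]|NL].
    2:{ exfalso. pose proof (neutral_alpha _ _ _ N Ty NL). discriminate. }
    subst t. simpl. apply notin_remove.
    destruct (Nat.eq_dec al f) as [E|NE]; [left; auto| right].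
    pose proof (lam_inv _ _ _ Ty f w eq_refl) as L. simpl in L.
    destruct L as [_ [PP Tw]]. change (tshift 0 O) with O in Tw.
    simpl in N.
    destruct (lam_or_not w) as [[g [u E]]|NLw].
    2:{ exfalso. destruct (neutral _ _ _ N Tw NLw) as [h [D [Hh HD]]].
        destruct (lookup2 _ _ _ _ _ _ HD); subst D.
        - destruct (spine _ _ _ Tw h _ Hh HD I) as [E L]. simpl in L.
          destruct (nargs w) as [|[|n]]; simpl in E; try discriminate; try lia.
          inversion E; subst A. unfold closed_ty in CA; simpl in CA; lia.
        - pose proof (head_O _ _ _ _ Tw Hh HD). discriminate. }
    subst w. simpl. apply notin_remove.
    destruct (Nat.eq_dec al g) as [E|NE2]; [left; auto| right].
    pose proof (lam_inv _ _ _ Tw g u eq_refl) as L. simpl in L.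
    destruct L as [_ Tu]. simpl in N.
    destruct (lam_or_not u) as [[g' [w E]]|NLu].
    { subst u. pose proof (lam_inv _ _ _ Tu g' w eq_refl) as H. simpl in H. contradiction. }
    destruct (neutral _ _ _ N Tu NLu) as [h [D [Hh HD]]].
    assert (RG : forall y D, lookup [(g, Arr B (TVar 0)); (f, Arr A (TVar 0)); (al, O)] y = Some D ->
              rig (tsubst 0 O D) (arity (tsubst 0 O D))).
    { intros y D0 HyD. destruct (lookup3 _ _ _ _ _ _ _ _ HyD) as [?|[?|?]]; subst D0.
      apply rigA; auto. apply rigA; auto. apply rigO. }
    assert (Hal : lookup [(g, Arr B (TVar 0)); (f, Arr A (TVar 0)); (al, O)] al = Some O).
    { simpl. apply Nat.eqb_neq in NE. apply Nat.eqb_neq in NE2. rewrite NE, NE2, Nat.eqb_refl. auto. }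
    assert (Hgen : forall C, output_type C -> lookup [(g, Arr B (TVar 0)); (f, Arr A (TVar 0)); (al, O)] h = Some (Arr C (TVar 0)) -> ~ In al (fv u)).
    { intros C OC HC. destruct (head_arrX _ _ _ _ Tu Hh HC) as [c [Eu Tc]]. subst u.
      simpl in N. destruct N as [_ Nc].
      pose proof (strengthen_X _ _ _ OC Tc Nc RG al).
      simpl. intros [I|I]; [subst h; rewrite Hal in HC; discriminate | contradiction]. }
    destruct (lookup3 _ _ _ _ _ _ _ _ HD) as [?|[?|?]]; subst D.
    + exact (Hgen B OB HD).
    + exact (Hgen A OA HD).
    + pose proof (head_O _ _ _ _ Tu Hh HD) as HO. unfold O in HO. discriminate.
Qed.

Lemma tl_var : forall n k, tl n (TVar k) = TVar k.
Proof. destruct n; reflexivity. Qed.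

Lemma list_body : forall A al x f, output_type A -> al <> x -> al <> f ->
  forall u, normal u ->
  typing [(f, Arr A (Arr (TVar 0) (TVar 0))); (x, TVar 0); (al, O)] u (TVar 0) ->
  ~ In al (fv u).
Proof.
  intros A al x f OA NX NF.
  set (G := [(f, Arr A (Arr (TVar 0) (TVar 0))); (x, TVar 0); (al, O)]).
  assert (Hal : lookup G al = Some O).
  { simpl. apply Nat.eqb_neq in NX. apply Nat.eqb_neq in NF. rewrite NX, NF, Nat.eqb_refl. auto. }
  assert (RG : forall y D, lookup G y = Some D -> rig (tsubst 0 O D) (arity (tsubst 0 O D))).
  { intros y D0 HyD. destruct (lookup3 _ _ _ _ _ _ _ _ HyD) as [?|[?|?]]; subst D0.
    - simpl. rewrite (closed_subst_id A 0 0 O) by (apply OA || lia).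
      repeat constructor. apply OA.
    - simpl. constructor.
    - apply rigO. }
  induction u; intros N Tu.
  - destruct (neutral _ _ _ N Tu (notlam_var _)) as [h [D [Hh HD]]].
    destruct (lookup3 _ _ _ _ _ _ _ _ HD) as [?|[?|?]]; subst D.
    + destruct (head_arr2X _ _ _ _ Tu Hh HD) as [a [c [E _]]]. discriminate.
    + pose proof (head_X _ _ _ Tu Hh HD) as E. simpl. intros [I|[]]. subst.
      inversion E; subst. rewrite Hal in HD. discriminate.
    + pose proof (head_O _ _ _ _ Tu Hh HD) as HO. unfold O in HO. discriminate.
  - pose proof (lam_inv _ _ _ Tu v u eq_refl) as H. simpl in H. contradiction.
  - destruct (neutral _ _ _ N Tu (notlam_app _ _)) as [h [D [Hh HD]]].
    destruct (lookup3 _ _ _ _ _ _ _ _ HD) as [?|[?|?]]; subst D.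
    + destruct (head_arr2X _ _ _ _ Tu Hh HD) as [a [c [E [Ta Tc]]]].
      inversion E; subst u1 u2. simpl in N. destruct N as [[_ Na] Nc].
      pose proof (strengthen_X _ _ _ OA Ta Na RG al).
      pose proof (IHu2 Nc Tc).
      simpl. intros [I|I].
      * subst h. rewrite Hal in HD. discriminate.
      * apply in_app_or in I as [I|I]; contradiction.
    + pose proof (head_X _ _ _ Tu Hh HD) as E. discriminate.
    + pose proof (head_O _ _ _ _ Tu Hh HD) as HO. unfold O in HO. discriminate.
Qed.

Lemma out_list : forall A, output_type A -> output_type (tlist A).
Proof.
  intros A OA. unfold tlist. rewrite (shift_closed A OA).
  pose proof OA as [CA [PA [OA0 _]]].
  split; [|split; [|split]].
  - unfold closed_ty; simpl. repeat split; try lia; eapply closed_mono; eauto.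
  - simpl. repeat split; auto.
  - simpl. rewrite OA0. reflexivity.
  - intros t al N Ty. destruct (lam_or_not t) as [[x [w E]]|NL].
    2:{ exfalso. pose proof (neutral_alpha _ _ _ N Ty NL). discriminate. }
    subst t. simpl. apply notin_remove.
    destruct (Nat.eq_dec al x) as [E|NE]; [left; auto| right].
    pose proof (lam_inv _ _ _ Ty x w eq_refl) as L. simpl in L.
    destruct L as [_ [_ Tw]]. change (tshift 0 O) with O in Tw.
    simpl in N.
    destruct (lam_or_not w) as [[f [u E]]|NLw].
    2:{ exfalso. destruct (neutral _ _ _ N Tw NLw) as [h [D [Hh HD]]].
        destruct (lookup2 _ _ _ _ _ _ HD); subst D.
        - destruct (spine _ _ _ Tw h _ Hh HD I) as [E _]. rewrite tl_var in E. discriminate.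
        - destruct (spine _ _ _ Tw h _ Hh HD I) as [E _]. unfold O in E.
          rewrite tl_const in E. discriminate. }
    subst w. simpl. apply notin_remove.
    destruct (Nat.eq_dec al f) as [E|NE2]; [left; auto| right].
    pose proof (lam_inv _ _ _ Tw f u eq_refl) as L. simpl in L.
    destruct L as [_ Tu]. simpl in N.
    exact (list_body A al x f OA NE NE2 u N Tu).
Qed.

Theorem corollary2p1p5 (A B : ty) :
  output_type A -> output_type B ->
  output_type (tand A B) /\ output_type (tor A B) /\ output_type (tlist A).
Proof.
  intros OA OB. split; [apply out_and|split; [apply out_or|apply out_list]]; auto.
Qed.
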